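(* Assume (F) and (H), and let $\bar c=\lim_{\varepsilon\to0^+}c_\varepsilon^*$. Suppose that along some sequence $\varepsilon_n\to0^+$ the critical profiles $v_{\varepsilon_n}$ converge, uniformly on compact subsets of $\mathbb R$, to $\bar v=\mathcal V_L(\cdot;0,1/2)$. Explicitly, $\bar v(z)=0$ for $z<-1/2$, $\bar v(z)=z+1/2$ for $z\in[-1/2,1/2]$, and $\bar v(z)=1$ for $z>1/2$. Then $\bar c=F(1)-h(1)$, where $F(v)=\int_0^v f(s)\,ds$.
   Context: Assumptions. - (F): $f\in C([0,1])$, $f(0)=f(1)=0$, $f(s)>0$ for $s\in(0,1)$, and there is $k>0$ with $f(s)\le ks$ and $f(s)\le k(1-s)$ for all $s\in[0,1]$. - (H): $h\in C^2([0,1])$ with $h(0)=h'(0)=0$. Problems and speeds. - For $\varepsilon>0$ and $c\in\mathbb R$, a front profile is a function $v$ with $|v'|<1$, $v(0)=1/2$, satisfying $\varepsilon\big(v'/\sqrt{1-(v')^2}\big)'-(c+h'(v))v'+f(v)=0$ on $\mathbb R$, $v(-\infty)=0$, $v(+\infty)=1$, $v'>0$. - The speed $c$ is admissible if such a profile exists (equivalently, if the problem $y'=(c+h'(v))\frac{\sqrt{y(2\varepsilon+y)}}{\varepsilon+y}-f(v)$, $y(0)=y(1)=0$, $y>0$ on $(0,1)$, has a solution). - The admissible speeds form $[c_\varepsilon^*,+\infty)$, and $c_\varepsilon^*$ (the critical speed) is nondecreasing in $\varepsilon$. - The critical profile $v_\varepsilon$ is the front profile with $c=c_\varepsilon^*$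 and $v_\varepsilon(0)=1/2$. *)

(* Defs.v *)
From Stdlib Require Import Reals.
From Coquelicot Require Import Coquelicot.
Open Scope R_scope.

Definition hypF (f : R -> R) : Prop :=
  (forall x, 0 <= x <= 1 -> forall e, 0 < e -> exists d, 0 < d /\
      forall y, 0 <= y <= 1 -> Rabs (y - x) < d -> Rabs (f y - f x) < e) /\
  f 0 = 0 /\ f 1 = 0 /\
  (forall s, 0 < s < 1 -> 0 < f s) /\
  exists k, 0 < k /\ forall s, 0 <= s <= 1 -> f s <= k * s /\ f s <= k * (1 - s).

(* (H): h in C^2([0,1]) (i.e. h agrees on [0,1] with a C^2 function on R),
   h(0) = h'(0) = 0. *)
Definition hypH (h : R -> R) : Prop :=
  exists H : R -> R,
    (forall x, ex_derive H x) /\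
    (forall x, ex_derive (Derive H) x) /\
    (forall x, continuous (Derive (Derive H)) x) /\
    (forall x, 0 <= x <= 1 -> h x = H x) /\
    h 0 = 0 /\ Derive H 0 = 0.

Definition front_profile (f h : R -> R) (eps c : R) (v : R -> R) : Prop :=
  exists d : R -> R,
    (forall z, is_derive v z (d z)) /\
    (forall z, Rabs (d z) < 1) /\
    (forall z, 0 < d z) /\
    v 0 = 1/2 /\
    (forall z, ex_derive (fun y => d y / sqrt (1 - d y ^ 2)) z) /\
    (forall z, eps * Derive (fun y => d y / sqrt (1 - d y ^ 2)) z
               - (c + Derive h (v z)) * d z + f (v z) = 0) /\
    is_lim v m_infty 0 /\
    is_lim v p_infty 1.

Definition admissible (f h : R -> R) (eps c : R) : Prop :=
  exists v, front_profile f h eps c v.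

Definition crit_speed (f h : R -> R) (eps : R) : Rbar :=
  Glb_Rbar (admissible f h eps).

Definition critical_profile (f h : R -> R) (eps : R) (v : R -> R) : Prop :=
  exists c, crit_speed f h eps = Finite c /\ front_profile f h eps c v.

Definition crit_speed_limit (f h : R -> R) (cbar : R) : Prop :=
  forall eta, 0 < eta -> exists delta, 0 < delta /\
    forall e, 0 < e < delta ->
      exists c, crit_speed f h e = Finite c /\ Rabs (c - cbar) < eta.

Definition vbar (z : R) : R :=
  if Rlt_dec z (-(1/2)) then 0
  else if Rle_dec z (1/2) then z + 1/2 else 1.

Definition cv_loc_unif (u : nat -> R -> R) (g : R -> R) : Prop :=
  forall a b e, 0 < e -> exists N : nat, forall n, (N <= n)%nat ->
    forall z, a <= z <= b -> Rabs (u n z - g z) < e.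

(* Main.v *)
Require Import Defs.
From Stdlib Require Import Reals Lra.
From Coquelicot Require Import Coquelicot.
Open Scope R_scope.

Definition clamp (x : R) : R := Rmax 0 (Rmin 1 x).

Lemma clamp_range x : 0 <= clamp x <= 1.
Proof. unfold clamp, Rmax, Rmin; repeat destruct Rle_dec; lra. Qed.

Lemma clamp_id x : 0 <= x <= 1 -> clamp x = x.
Proof. unfold clamp, Rmax, Rmin; repeat destruct Rle_dec; lra. Qed.

Lemma clamp_lip x y : Rabs (clamp y - clamp x) <= Rabs (y - x).
Proof. unfold clamp, Rmax, Rmin; repeat destruct Rle_dec; unfold Rabs; repeat destruct Rcase_abs; lra. Qed.

Lemma vbar_clamp z : vbar z = clamp (z + 1/2).
Proof. unfold vbar, clamp, Rmax, Rmin; repeat destruct Rle_dec; repeat destruct Rlt_dec; lra. Qed.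

Lemma clamp_cont x : continuous clamp x.
Proof.
  apply filterlim_locally => eps. exists eps => y Hy.
  unfold ball in *; simpl in *; unfold AbsRing_ball in *; simpl in *.
  eapply Rle_lt_trans; [apply clamp_lip|exact Hy].
Qed.

Lemma ft_cont f : hypF f -> forall x, continuous (fun y => f (clamp y)) x.
Proof.
  intros [Hc _] x. apply filterlim_locally => eps.
  destruct (Hc (clamp x) (clamp_range x) eps (cond_pos eps)) as [d [Hd Hd2]].
  exists (mkposreal d Hd) => y Hy.
  unfold ball in *; simpl in *; unfold AbsRing_ball in *; simpl in *.
  unfold minus, plus, opp in *; simpl in *.
  apply Hd2. apply clamp_range. eapply Rle_lt_trans; [apply clamp_lip|exact Hy].
Qed.

Lemma deriv_mvt (w d : R -> R) : (forall z, is_derive w z (d z)) ->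
  forall x y, x < y -> exists c, x <= c <= y /\ w y - w x = d c * (y - x).
Proof.
  intros Hd x y Hxy.
  destruct (MVT_gen w x y d) as [c [Hc Hc2]].
  - intros; apply Hd.
  - intros z _. apply continuity_pt_filterlim. apply (ex_derive_continuous (V:=R_NormedModule)).
    eexists; apply Hd.
  - exists c; split; auto. rewrite Rmin_left, Rmax_right in Hc; lra.
Qed.

Lemma prof_incr f h e c w : front_profile f h e c w -> forall x y, x < y -> w x < w y.
Proof.
  intros [d [Hd [_ [Hp _]]]] x y Hxy.
  destruct (deriv_mvt w d Hd x y Hxy) as [k [_ Hk]].
  specialize (Hp k). nra.
Qed.

Lemma prof_range f h e c w : front_profile f h e c w -> forall z, 0 < w z < 1.
Proof.
  intros Hf z. pose proof (prof_incr _ _ _ _ _ Hf) as Hi.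
  destruct Hf as [d [_ [_ [_ [_ [_ [_ [Hm Hpl]]]]]]]].
  apply is_lim_spec in Hm. apply is_lim_spec in Hpl.
  split.
  - destruct (Rlt_or_le 0 (w z)) as [H|H]; auto. exfalso.
    assert (H1 : w (z-1) < w z) by (apply Hi; lra).
    destruct (Hm (mkposreal (- w (z-1)) ltac:(lra))) as [M HM]. simpl in HM.
    set (x := Rmin (M-1) (z-1)).
    assert (Hx : w x <= w (z-1)).
    { destruct (Req_dec x (z-1)) as [E|E]. rewrite E; lra.
      left; apply Hi. unfold x in *. unfold Rmin in *; destruct Rle_dec; lra. }
    specialize (HM x ltac:(unfold x, Rmin; destruct Rle_dec; lra)).
    revert HM. unfold Rabs; destruct Rcase_abs; lra.
  - destruct (Rlt_or_le (w z) 1) as [H|H]; auto. exfalso.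
    assert (H1 : w z < w (z+1)) by (apply Hi; lra).
    destruct (Hpl (mkposreal (w (z+1) - 1) ltac:(lra))) as [M HM]. simpl in HM.
    set (x := Rmax (M+1) (z+1)).
    assert (Hx : w (z+1) <= w x).
    { destruct (Req_dec x (z+1)) as [E|E]. rewrite E; lra.
      left; apply Hi. unfold x in *. unfold Rmax in *; destruct Rle_dec; lra. }
    specialize (HM x ltac:(unfold x, Rmax; destruct Rle_dec; lra)).
    revert HM. unfold Rabs; destruct Rcase_abs; lra.
Qed.

Lemma loc_in01 (h H : R -> R) x : (forall y, 0 <= y <= 1 -> h y = H y) -> 0 < x < 1 ->
  locally x (fun t => h t = H t).
Proof.
  intros Hh Hx. exists (mkposreal (Rmin x (1-x)) ltac:(apply Rmin_pos; lra)).
  intros y Hy. unfold ball in Hy; simpl in Hy; unfold AbsRing_ball in Hy; simpl in Hy.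
  unfold minus, plus, opp in Hy; simpl in Hy.
  apply Hh. pose proof (Rmin_l x (1-x)). pose proof (Rmin_r x (1-x)).
  apply Rabs_def2 in Hy. simpl in *. lra.
Qed.

Lemma integ_id (f h H : R -> R) (e c : R) (w d : R -> R) (a b : R) :
  hypF f ->
  (forall x, ex_derive H x) -> (forall x, 0 <= x <= 1 -> h x = H x) ->
  (forall z, is_derive w z (d z)) ->
  (forall z, ex_derive (fun y => d y / sqrt (1 - d y ^ 2)) z) ->
  (forall z, e * Derive (fun y => d y / sqrt (1 - d y ^ 2)) z
               - (c + Derive h (w z)) * d z + f (w z) = 0) ->
  (forall z, 0 < w z < 1) ->
  a <= b ->
  e * (d b / sqrt (1 - d b ^ 2) - d a / sqrt (1 - d a ^ 2))
   - c * (w b - w a) - (H (w b) - H (w a))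
  = - RInt (fun z => f (clamp (w z))) a b.
Proof.
  intros HF HH Hh Hd Hp Hode Hr Hab.
  set (p := fun y => d y / sqrt (1 - d y ^ 2)).
  set (G := fun z => e * p z - c * w z - H (w z)).
  assert (HG : forall z, is_derive G z (- f (clamp (w z)))).
  { intro z.
    assert (E : - f (clamp (w z)) = e * Derive p z - c * d z - Derive H (w z) * d z).
    { rewrite clamp_id by (specialize (Hr z); lra).
      rewrite <- (Derive_ext_loc h H) by (apply loc_in01; auto).
      specialize (Hode z). assert (Heq : Derive p z = Derive (fun y : R => d y / sqrt (1 - d y ^ 2)) z) by reflexivity. rewrite Heq. lra. }
    rewrite E.
    assert (D1 : is_derive G z (minus (minus (e * Derive p z) (c * d z)) (scal (d z) (Derive H (w z))))).
    { apply (is_derive_minus (fun z => e * p z - c * w z) (fun z => H (w z))).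
      apply (is_derive_minus (fun z => e * p z) (fun z => c * w z)).
      apply is_derive_scal. apply Derive_correct. apply Hp.
      apply is_derive_scal. apply Hd.
      apply (is_derive_comp H w). apply Derive_correct, HH. apply Hd. }
    revert D1. unfold minus, plus, opp, scal; simpl; unfold mult; simpl.
    intro D1. replace (e * Derive p z - c * d z - Derive H (w z) * d z)
      with (e * Derive p z + - (c * d z) + - (d z * Derive H (w z))) by ring.
    exact D1. }
  assert (HI := is_RInt_derive G (fun z => - f (clamp (w z))) a b (fun x _ => HG x)).
  assert (HI' : is_RInt (fun z => - f (clamp (w z))) a b (minus (G b) (G a))).
  { apply HI. intros x _. apply (continuous_opp (fun z => f (clamp (w z)))).
    apply (continuous_comp w (fun y => f (clamp y))).
    apply (ex_derive_continuous (V:=R_NormedModule)). eexists; apply Hd.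
    apply ft_cont; auto. }
  apply (is_RInt_unique (V:=R_CompleteNormedModule)) in HI'.
  assert (Hex : ex_RInt (fun z => f (clamp (w z))) a b).
  { apply (ex_RInt_continuous (V:=R_CompleteNormedModule)). intros z _.
    apply (continuous_comp w (fun y => f (clamp y))).
    apply (ex_derive_continuous (V:=R_NormedModule)). eexists; apply Hd.
    apply ft_cont; auto. }
  assert (Ho : RInt (fun z => - f (clamp (w z))) a b = - RInt (fun z => f (clamp (w z))) a b).
  { apply (RInt_opp (V:=R_CompleteNormedModule)). exact Hex. }
  rewrite Ho in HI'. unfold G, minus, plus, opp in HI'; simpl in HI'. unfold p in HI'.
  lra.
Qed.

Lemma ft_ex (f : R -> R) a b : hypF f -> ex_RInt (fun y => f (clamp y)) a b.
Proof.
  intro HF. apply (ex_RInt_continuous (V:=R_CompleteNormedModule)).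
  intros; apply ft_cont; auto.
Qed.

Lemma J_int (f : R -> R) a b : hypF f -> a <= -(1/2) -> 1/2 <= b ->
  RInt (fun z => f (clamp (vbar z))) a b = RInt f 0 1.
Proof.
  intros HF Ha Hb.
  set (ft := fun y => f (clamp y)).
  rewrite (RInt_ext _ (fun z => scal 1 (ft (1 * z + 1/2)))).
  2:{ intros x _. unfold ft, scal; simpl; unfold mult; simpl.
      rewrite vbar_clamp, (clamp_id (clamp _)) by apply clamp_range.
      replace (1 * x + 1/2) with (x + 1/2) by ring. ring. }
  rewrite (RInt_comp_lin (V:=R_CompleteNormedModule)) by apply ft_ex, HF.
  destruct HF as [Hc [H0 [H1 HF2]]].
  assert (HF' : hypF f) by (split; [exact Hc|]; split; [exact H0|]; split; [exact H1|]; exact HF2).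
  rewrite <- (RInt_Chasles (V:=R_CompleteNormedModule) ft _ 0) by apply ft_ex, HF'.
  rewrite <- (RInt_Chasles (V:=R_CompleteNormedModule) ft 0 1) by apply ft_ex, HF'.
  rewrite (RInt_ext ft (fun _ => 0) (1*a+1/2) 0).
  2:{ intros x Hx. unfold ft. rewrite Rmin_left in Hx by lra. rewrite Rmax_right in Hx by lra.
      unfold clamp. rewrite Rmin_right by lra. rewrite Rmax_left by lra. auto. }
  rewrite (RInt_ext ft (fun _ => 0) 1 (1*b+1/2)).
  2:{ intros x Hx. unfold ft. rewrite Rmin_left in Hx by lra. rewrite Rmax_right in Hx by lra.
      unfold clamp. rewrite Rmin_left by lra. rewrite Rmax_right by lra. auto. }
  rewrite (RInt_ext ft f 0 1).
  2:{ intros x Hx. unfold ft. rewrite Rmin_left in Hx by lra. rewrite Rmax_right in Hx by lra.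
      rewrite clamp_id; auto; lra. }
  rewrite !RInt_const. unfold plus, scal; simpl; unfold mult; simpl. ring.
Qed.

Lemma vbar_right z : 1/2 <= z -> vbar z = 1.
Proof. intro; rewrite vbar_clamp; unfold clamp, Rmax, Rmin; repeat destruct Rle_dec; lra. Qed.
Lemma vbar_left z : z <= -(1/2) -> vbar z = 0.
Proof. intro; rewrite vbar_clamp; unfold clamp, Rmax, Rmin; repeat destruct Rle_dec; lra. Qed.

Lemma p_bound d : 0 < d -> d <= 1/2 -> 0 <= d / sqrt (1 - d ^ 2) <= 1.
Proof.
  intros H0 H1.
  assert (Hs : 0 < sqrt (1 - d ^ 2)) by (apply sqrt_lt_R0; nra).
  assert (Hle : d <= sqrt (1 - d ^ 2)).
  { rewrite <- (sqrt_Rsqr d) at 1 by lra. apply sqrt_le_1; unfold Rsqr; nra. }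
  split.
  - unfold Rdiv; apply Rmult_le_pos; [lra|]. left; apply Rinv_0_lt_compat; auto.
  - apply (Rmult_le_reg_r (sqrt (1 - d ^ 2))); auto.
    unfold Rdiv; rewrite Rmult_assoc, Rinv_l by lra. lra.
Qed.

Lemma cont_eps (H : R -> R) x : continuous H x ->
  forall e, 0 < e -> exists r, 0 < r /\ forall y, Rabs (y - x) < r -> Rabs (H y - H x) < e.
Proof.
  intros Hc e He. apply filterlim_locally with (eps := mkposreal e He) in Hc.
  destruct Hc as [r Hr]. exists r; split; [apply cond_pos|].
  intros y Hy. apply (Hr y). exact Hy.
Qed.

Lemma small_zero x K : 0 <= K -> (forall eta, 0 < eta -> eta <= 1/4 -> Rabs x <= K * eta) -> x = 0.
Proof.
  intros HK H. destruct (Req_dec x 0) as [E|E]; auto. exfalso.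
  assert (Hx : 0 < Rabs x) by (apply Rabs_pos_lt; auto).
  set (eta := Rmin (1/4) (Rabs x / (2 * (K + 1)))).
  assert (He : 0 < eta) by (apply Rmin_pos; [lra| apply Rdiv_lt_0_compat; lra]).
  assert (He2 : eta <= Rabs x / (2 * (K + 1))) by apply Rmin_r.
  specialize (H eta He (Rmin_l _ _)).
  assert (eta * (2 * (K + 1)) <= Rabs x).
  { apply (Rmult_le_compat_r (2 * (K+1))) in He2; [|lra].
    unfold Rdiv in He2. rewrite Rmult_assoc, Rinv_l in He2 by lra. lra. }
  nra.
Qed.

Lemma absb x B : Rabs x <= B -> - B <= x <= B.
Proof. intro H; pose proof (Rle_abs x); pose proof (Rle_abs (-x)); rewrite Rabs_Ropp in *; lra. Qed.

Theorem corollary4 (f h : R -> R) (cbar : R) (eps : nat -> R) (v : nat -> R -> R) :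
  hypF f -> hypH h ->
  crit_speed_limit f h cbar ->
  (forall n, 0 < eps n) -> is_lim_seq eps 0 ->
  (forall n, critical_profile f h (eps n) (v n)) ->
  cv_loc_unif v vbar ->
  cbar = RInt f 0 1 - h 1.
Proof.
  intros HF HH Hlim Hep Heps Hcp Hcv.
  destruct HH as [H [HdH [_ [_ [Hh [h0 _]]]]]].
  assert (HcH : forall x, continuous H x)
    by (intro x; apply (ex_derive_continuous (V:=R_NormedModule)); apply HdH).
  assert (H0 : H 0 = 0) by (rewrite <- Hh by lra; exact h0).
  assert (H1 : h 1 = H 1) by (apply Hh; lra).
  apply is_lim_seq_spec in Heps.
  enough (cbar - (RInt f 0 1 - h 1) = 0) by lra.
  apply (small_zero _ (2 * Rabs cbar + 12)); [pose proof (Rabs_pos cbar); lra|].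
  intros eta Heta Heta4.
  destruct (cont_eps H 1 (HcH 1) eta Heta) as [r1 [Hr1 HR1]].
  destruct (cont_eps H 0 (HcH 0) eta Heta) as [r0 [Hr0 HR0]].
  destruct (Heine_cor2 (f:=fun y => f (clamp y)) (a:=0) (b:=1)) with (eps := mkposreal eta Heta)
    as [r2 HR2].
  { intros x _. apply continuity_pt_filterlim. apply ft_cont; auto. }
  simpl in HR2.
  set (sg := Rmin (Rmin eta r1) (Rmin r0 r2)).
  assert (Hsg : 0 < sg) by (apply Rmin_pos; apply Rmin_pos; auto; apply cond_pos).
  assert (Hsg1 : sg <= eta /\ sg <= r1 /\ sg <= r0 /\ sg <= r2).
  { unfold sg. pose proof (Rmin_l (Rmin eta r1) (Rmin r0 r2)).
    pose proof (Rmin_r (Rmin eta r1) (Rmin r0 r2)).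
    pose proof (Rmin_l eta r1). pose proof (Rmin_r eta r1).
    pose proof (Rmin_l r0 r2). pose proof (Rmin_r r0 r2). lra. }
  destruct (Hcv (-2) 2 sg Hsg) as [N HN].
  destruct (Hlim eta Heta) as [d0 [Hd0 Hdl]].
  assert (Hm : 0 < Rmin d0 eta) by (apply Rmin_pos; lra).
  destruct (Heps (mkposreal _ Hm)) as [N2 HN2]. simpl in HN2.
  set (n := max N N2).
  assert (Hen : eps n < d0 /\ eps n < eta).
  { specialize (HN2 n (Nat.le_max_r _ _)). specialize (Hep n).
    pose proof (Rmin_l d0 eta). pose proof (Rmin_r d0 eta).
    rewrite Rminus_0_r, Rabs_pos_eq in HN2 by lra. lra. }
  specialize (HN n (Nat.le_max_l _ _)).
  destruct (Hcp n) as [c [Hcs Hfp]].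
  destruct (Hdl (eps n) ltac:(split; [apply Hep|lra])) as [c' [Hcs' Hc']].
  rewrite Hcs in Hcs'. injection Hcs' as Ecc. subst c'.
  pose proof (prof_range _ _ _ _ _ Hfp) as Hr.
  destruct Hfp as [d [Hd [Hd1 [Hdpos [_ [Hpd [Hode _]]]]]]].
  destruct (deriv_mvt (v n) d Hd 1 2 ltac:(lra)) as [b [Hb Hbd]].
  destruct (deriv_mvt (v n) d Hd (-2) (-1) ltac:(lra)) as [a [Ha Had]].
  pose proof (HN 1 ltac:(lra)) as V1. pose proof (HN 2 ltac:(lra)) as V2.
  pose proof (HN (-1) ltac:(lra)) as V3. pose proof (HN (-2) ltac:(lra)) as V4.
  pose proof (HN b ltac:(lra)) as Vb. pose proof (HN a ltac:(lra)) as Va.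
  rewrite vbar_right in V1, V2, Vb by lra.
  rewrite vbar_left in V3, V4, Va by lra.
  apply Rabs_def2 in V1, V2, V3, V4, Vb, Va.
  assert (Pb := p_bound (d b) (Hdpos b) ltac:(lra)).
  assert (Pa := p_bound (d a) (Hdpos a) ltac:(lra)).
  pose proof (integ_id f h H (eps n) c (v n) d a b HF HdH Hh Hd Hpd Hode Hr ltac:(lra)) as Hid.
  pose proof (J_int f a b HF ltac:(lra) ltac:(lra)) as HJ.
  assert (HIJ : Rabs (RInt (fun z => f (clamp (v n z))) a b
                      - RInt (fun z => f (clamp (vbar z))) a b) <= (b - a) * eta).
  { assert (Ex1 : ex_RInt (fun z => f (clamp (v n z))) a b).
    { apply (ex_RInt_continuous (V:=R_CompleteNormedModule)). intros z _.
      apply (continuous_comp (v n) (fun y => f (clamp y))).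
      apply (ex_derive_continuous (V:=R_NormedModule)). eexists; apply Hd.
      apply ft_cont; auto. }
    assert (Ex2 : ex_RInt (fun z => f (clamp (vbar z))) a b).
    { apply (ex_RInt_continuous (V:=R_CompleteNormedModule)). intros z _.
      apply (continuous_ext (fun z => f (clamp (clamp (z + 1/2))))).
      { intro t; rewrite vbar_clamp; auto. }
      apply (continuous_comp (fun z => clamp (z + 1/2)) (fun y => f (clamp y))).
      apply (continuous_comp (fun z => z + 1/2) clamp).
      apply (continuous_plus (fun z => z) (fun _ => 1/2)).
      apply continuous_id. apply continuous_const. apply clamp_cont.
      apply ft_cont; auto. }
    pose proof (RInt_minus (V:=R_CompleteNormedModule) _ _ a b Ex1 Ex2) as Em.
    unfold minus, plus, opp in Em; simpl in Em.
    replace (RInt (fun z => f (clamp (v n z))) a b - RInt (fun z => f (clamp (vbar z))) a b)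
      with (RInt (fun z => f (clamp (v n z)) + - f (clamp (vbar z))) a b) by (exact Em).
    apply abs_RInt_le_const; [lra| |].
    - apply (ex_RInt_minus (V:=R_CompleteNormedModule)); auto.
    - intros t Ht. left. apply HR2.
      + specialize (Hr t); lra.
      + rewrite vbar_clamp; apply clamp_range.
      + pose proof (HN t ltac:(lra)). lra. }
  rewrite HJ in HIJ.
  assert (EH1 : Rabs (H (v n b) - H 1) < eta) by (apply HR1; apply Rabs_def1; lra).
  assert (EH0 : Rabs (H (v n a) - H 0) < eta) by (apply HR0; apply Rabs_def1; lra).
  apply Rabs_def2 in EH1, EH0, Hc'.
  assert (Hu : Rabs (c * (1 - v n b + v n a)) <= (Rabs cbar + 1) * (2 * eta)).
  { rewrite Rabs_mult. apply Rmult_le_compat; try apply Rabs_pos.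
    - assert (Rabs c <= Rabs (c - cbar) + Rabs cbar).
      { replace c with ((c - cbar) + cbar) at 1 by ring. apply Rabs_triang. }
      assert (Rabs (c - cbar) < eta) by (apply Rabs_def1; lra). lra.
    - apply Rabs_le. lra. }
  apply absb in Hu. 
  assert (Ep : Rabs (eps n * (d b / sqrt (1 - d b ^ 2) - d a / sqrt (1 - d a ^ 2))) <= eta).
  { rewrite Rabs_mult, Rabs_pos_eq by (left; apply Hep).
    assert (Rabs (d b / sqrt (1 - d b ^ 2) - d a / sqrt (1 - d a ^ 2)) <= 1)
      by (apply Rabs_le; lra).
    pose proof (Hep n). nra. }
  apply absb in Ep. apply absb in HIJ.
  assert (Ecu : c * (1 - v n b + v n a) = c - c * (v n b - v n a)) by ring.
  rewrite Ecu in Hu.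
  pose proof (Rabs_pos cbar).
  assert ((b - a) * eta <= 4 * eta) by nra.
  apply Rabs_le. rewrite H1. lra.
Qed.
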